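(* Let $T>0$, $\underline{\Phi}\in\mathbb{R}$, and let $\mu\in C([0,T],(0,\infty))$ satisfy $\Phi_h(\mu)\neq0$. Consider: (a) $\Phi(z_\mu(T))=\underline{\Phi}$ and there exists $\lambda\in\mathbb{R}$ such that for every $\delta\mu\in C([0,T],\mathbb{R})$, $\frac{\mathrm{d}}{\mathrm{d}\varepsilon}\big|_{\varepsilon=0}\big[\mathcal{G}(\mu+\varepsilon\delta\mu)+\lambda\,\Phi(z_{\mu+\varepsilon\delta\mu}(T))\big]=0$ (first-order necessary conditions for a stationary point of $\mathcal{G}$ subject to $\Phi(z_\mu(T))=\underline{\Phi}$); (b) for a given $C_2>0$: $\mathcal{I}(\mu)=C_2$ and there exists $\lambda_{\mathrm{ref}}\in\mathbb{R}$ such that for every $\delta\mu\in C([0,T],\mathbb{R})$, $\frac{\mathrm{d}}{\mathrm{d}\varepsilon}\big|_{\varepsilon=0}\big[\mathcal{G}(\mu+\varepsilon\delta\mu)+\lambda_{\mathrm{ref}}\,\mathcal{I}(\mu+\varepsilon\delta\mu)\big]=0$ (first-order necessary conditions for a stationary point of $\mathcal{G}$ subject to $\mathcal{I}(\mu)=C_2$). Then: if (a) holds, then (b) holds with $C_2:=\mathcal{I}(\mu)$, which satisfies $\Phi(\hat z(C_2))=\underline{\Phi}$, and with $\lambda_{\mathrm{ref}}=\lambda\,\Phi_h(\mu)$. Conversely, if (b) holds for some $C_2>0$ satisfying $\Phi(\hat z(C_2))=\underline{\Phi}$, then (a) holds with $\lambda=\lambda_{\mathrm{ref}}/\Phi_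h(\mu)$.
   Context: Standing setup: $n,s\ge1$, $p\in\mathbb{R}^s$, $z_0\in\mathbb{R}^n$; $h:\mathbb{R}^n\times\mathbb{R}^s\to\mathbb{R}^n$ is continuously differentiable in its first argument and such that the autonomous initial value problem $\hat z'(\tau)=h(\hat z(\tau),p)$, $\hat z(0)=z_0$ has a unique solution $\hat z$ defined for all $\tau\in\mathbb{R}$. For $T>0$ and $\mu\in C([0,T],\mathbb{R})$, $z_\mu:[0,T]\to\mathbb{R}^n$ denotes the solution of $\dot z(t)=\mu(t)h(z(t),p)$, $z(0)=z_0$. $\Phi:\mathbb{R}^n\to\mathbb{R}$ is continuously differentiable, and $g:\mathbb{R}\to\mathbb{R}$ is continuously differentiable and positive. Define $\mathcal{G}(\mu):=\int_0^T g(\mu(t))\,\mathrm{d}t$, $\mathcal{I}(\mu):=\int_0^T\mu(t)\,\mathrm{d}t$, and $\Phi_h(\mu):=\nabla\Phi(z_\mu(T))\cdot h(z_\mu(T),p)$ (the Lie derivative of $\Phi$ along $h$ at the terminal state). *)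

(* Defs.v *)
From Stdlib Require Import Reals Lra ClassicalEpsilon FunctionalExtensionality.
From Stdlib Require Fin.
Open Scope R_scope.

Definition vec (n : nat) : Type := Fin.t n -> R.

Fixpoint fsum (n : nat) : (Fin.t n -> R) -> R :=
  match n with
  | O => fun _ => 0
  | S m => fun f => f Fin.F1 + fsum m (fun i => f (Fin.FS i))
  end.

Definition dot {n : nat} (x y : vec n) : R := fsum n (fun i => x i * y i).

Definition vupd {n : nat} (x : vec n) (i : Fin.t n) (t : R) : vec n :=
  fun j => if Fin.eq_dec i j then x j + t else x j.

Definition cont_on (a b : R) (f : R -> R) : Prop :=
  forall t, a <= t <= b -> forall eps, eps > 0 ->
    exists delta, delta > 0 /\
      forall t', a <= t' <= b -> Rabs (t' - t) < delta -> Rabs (f t' - f t) < eps.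

Definition cont_vec {n : nat} (F : vec n -> R) : Prop :=
  forall x eps, eps > 0 -> exists delta, delta > 0 /\
    forall y : vec n, (forall i, Rabs (y i - x i) < delta) -> Rabs (F y - F x) < eps.

Definition C1_vec {n : nat} (f : vec n -> R) : Prop :=
  exists D : Fin.t n -> vec n -> R,
    (forall i x, derivable_pt_lim (fun t => f (vupd x i t)) 0 (D i x)) /\
    (forall i, cont_vec (D i)).

Definition C1_real (g : R -> R) : Prop :=
  exists g' : R -> R, (forall x, derivable_pt_lim g x (g' x)) /\ continuity g'.

Definition partial {n : nat} (f : vec n -> R) (i : Fin.t n) (x : vec n) : R :=
  epsilon (inhabits 0) (fun l => derivable_pt_lim (fun t => f (vupd x i t)) 0 l).

Definition grad {n : nat} (f : vec n -> R) (x : vec n) : vec n := fun i => partial f i x.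

Definition RInt (f : R -> R) (a b : R) : R :=
  epsilon (inhabits 0) (fun l => exists pr : Riemann_integrable f a b, RiemannInt pr = l).

Definition Gfun (g : R -> R) (T : R) (mu : R -> R) : R := RInt (fun t => g (mu t)) 0 T.
Definition Ifun (T : R) (mu : R -> R) : R := RInt mu 0 T.

Definition is_sol {n s : nat} (h : vec n -> vec s -> vec n) (p : vec s) (z0 : vec n)
    (T : R) (mu : R -> R) (z : R -> vec n) : Prop :=
  (forall j, cont_on 0 T (fun t => z t j)) /\
  z 0 = z0 /\
  (forall t, 0 < t < T -> forall j,
      derivable_pt_lim (fun u => z u j) t (mu t * h (z t) p j)).

Definition is_global_sol {n s : nat} (h : vec n -> vec s -> vec n) (p : vec s) (z0 : vec n)
    (zh : R -> vec n) : Prop :=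
  zh 0 = z0 /\
  (forall tau j, derivable_pt_lim (fun u => zh u j) tau (h (zh tau) p j)).

Definition Phih {n s : nat} (Phi : vec n -> R) (h : vec n -> vec s -> vec n) (p : vec s)
    (zsol : (R -> R) -> R -> vec n) (T : R) (mu : R -> R) : R :=
  dot (grad Phi (zsol mu T)) (h (zsol mu T) p).

Definition stationary_a {n : nat} (g : R -> R) (Phi : vec n -> R)
    (zsol : (R -> R) -> R -> vec n) (T : R) (mu : R -> R) (lam : R) : Prop :=
  forall dmu : R -> R, cont_on 0 T dmu ->
    derivable_pt_lim
      (fun eps => Gfun g T (fun t => mu t + eps * dmu t)
                  + lam * Phi (zsol (fun t => mu t + eps * dmu t) T)) 0 0.

Definition stationary_b (g : R -> R) (T : R) (mu : R -> R) (lamref : R) : Prop :=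
  forall dmu : R -> R, cont_on 0 T dmu ->
    derivable_pt_lim
      (fun eps => Gfun g T (fun t => mu t + eps * dmu t)
                  + lamref * Ifun T (fun t => mu t + eps * dmu t)) 0 0.

(* Main.v *)
Require Import Defs.
From Stdlib Require Import Reals.
Open Scope R_scope.
From Stdlib Require Import Lra ClassicalEpsilon FunctionalExtensionality List.
From Coquelicot Require Import Coquelicot.
Open Scope R_scope.

Definition clamp (a b t : R) : R := Rmin b (Rmax a t).

Lemma clamp_in a b t : a <= b -> a <= clamp a b t <= b.
Proof. intros; unfold clamp, Rmin, Rmax; repeat destruct Rle_dec; lra. Qed.

Lemma clamp_id a b t : a <= t <= b -> clamp a b t = t.
Proof. intros; unfold clamp, Rmin, Rmax; repeat destruct Rle_dec; lra. Qed.

Lemma clamp_lip a b t t' : a <= b -> Rabs (clamp a b t' - clamp a b t) <= Rabs (t' - t).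
Proof.
  intros; unfold clamp, Rmin, Rmax; repeat destruct Rle_dec;
  unfold Rabs; repeat destruct Rcase_abs; lra.
Qed.

Lemma cont_on_clamp a b f : a <= b -> cont_on a b f ->
  forall x, continuity_pt (fun t => f (clamp a b t)) x.
Proof.
  intros Hab Hf x. unfold continuity_pt, continue_in, limit1_in, limit_in; simpl.
  unfold R_dist. intros eps Heps.
  destruct (Hf (clamp a b x) (clamp_in a b x Hab) eps Heps) as [d [Hd H]].
  exists d; split; auto. intros y [_ Hy].
  apply H. apply clamp_in; auto.
  eapply Rle_lt_trans; [apply clamp_lip; auto| exact Hy].
Qed.

Lemma cont_on_clamp' a b f : a <= b -> cont_on a b f ->
  forall x, continuous (fun t => f (clamp a b t)) x.
Proof. intros; apply continuity_pt_filterlim, cont_on_clamp; auto. Qed.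

Lemma cont_on_exRInt a b f : a <= b -> cont_on a b f -> ex_RInt f a b.
Proof.
  intros Hab Hf.
  apply ex_RInt_ext with (f := fun t => f (clamp a b t)).
  - intros x Hx. rewrite Rmin_left in Hx by lra. rewrite Rmax_right in Hx by lra.
    rewrite clamp_id; auto; lra.
  - apply (ex_RInt_continuous (V:=R_CompleteNormedModule)). intros; apply cont_on_clamp'; auto.
Qed.

Lemma RInt_eq f a b : ex_RInt f a b -> Defs.RInt f a b = RInt.RInt f a b.
Proof.
  intros H. pose proof (ex_RInt_Reals_0 _ _ _ H) as pr.
  unfold Defs.RInt.
  destruct (epsilon_spec (inhabits 0) (fun l => exists pr : Riemann_integrable f a b, RiemannInt pr = l))
    as [pr' Hpr'].
  - exists (RiemannInt pr), pr; auto.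
  - rewrite <- Hpr'. rewrite (RInt_Reals _ _ _ pr'). auto.
Qed.

Lemma cont_on_plus a b f g c : cont_on a b f -> cont_on a b g ->
  cont_on a b (fun t => f t + c * g t).
Proof.
  intros Hf Hg t Ht eps Heps.
  destruct (Hf t Ht (eps/2)) as [d1 [Hd1 H1]]; [lra|].
  destruct (Hg t Ht (eps/2/(Rabs c + 1))) as [d2 [Hd2 H2]].
  { apply Rdiv_lt_0_compat; [lra|]. pose proof (Rabs_pos c); lra. }
  exists (Rmin d1 d2); split; [apply Rmin_glb_lt; auto|].
  intros t' Ht' Hd.
  specialize (H1 t' Ht' (Rlt_le_trans _ _ _ Hd (Rmin_l _ _))).
  specialize (H2 t' Ht' (Rlt_le_trans _ _ _ Hd (Rmin_r _ _))).
  replace (f t' + c * g t' - (f t + c * g t)) with ((f t' - f t) + c * (g t' - g t)) by ring.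
  eapply Rle_lt_trans; [apply Rabs_triang|]. rewrite Rabs_mult.
  assert (Rabs c * Rabs (g t' - g t) <= eps/2).
  { pose proof (Rabs_pos c). pose proof (Rabs_pos (g t' - g t)).
    assert (Rabs c * Rabs (g t' - g t) <= (Rabs c + 1) * Rabs (g t' - g t)) by nra.
    assert ((Rabs c + 1) * Rabs (g t' - g t) <= (Rabs c + 1) * (eps/2/(Rabs c+1))) by
      (apply Rmult_le_compat_l; lra).
    replace ((Rabs c + 1) * (eps/2/(Rabs c+1))) with (eps/2) in H4 by (field; lra). lra. }
  lra.
Qed.

Lemma Ifun_lin T mu dmu eps : 0 <= T -> cont_on 0 T mu -> cont_on 0 T dmu ->
  Ifun T (fun t => mu t + eps * dmu t) = Ifun T mu + eps * Ifun T dmu.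
Proof.
  intros HT Hm Hd. unfold Ifun.
  rewrite !RInt_eq; try (apply cont_on_exRInt; auto).
  2: apply cont_on_plus; auto.
  pose proof (cont_on_exRInt _ _ _ HT Hm). pose proof (cont_on_exRInt _ _ _ HT Hd).
  apply is_RInt_unique.
  apply (is_RInt_plus (V:=R_NormedModule) mu (fun t => eps * dmu t)).
  - apply (RInt_correct (V:=R_CompleteNormedModule)); auto.
  - apply (is_RInt_scal (V:=R_NormedModule) dmu 0 T eps).
    apply (RInt_correct (V:=R_CompleteNormedModule)); auto.
Qed.

Lemma Ifun_pos T mu : 0 < T -> cont_on 0 T mu -> (forall t, 0 <= t <= T -> 0 < mu t) -> Ifun T mu > 0.
Proof.
  intros HT Hm Hp. unfold Ifun. rewrite RInt_eq by (apply cont_on_exRInt; auto; lra).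
  rewrite (RInt_ext mu (fun t => mu (clamp 0 T t))).
  - apply RInt_gt_0; auto.
    + intros x Hx; apply Hp, clamp_in; lra.
    + intros; apply cont_on_clamp'; auto; lra.
  - intros x Hx. rewrite Rmin_left in Hx by lra. rewrite Rmax_right in Hx by lra.
    rewrite clamp_id; auto; lra.
Qed.

Fixpoint enum (n : nat) : list (Fin.t n) :=
  match n with O => nil | S m => Fin.F1 :: map Fin.FS (enum m) end.

Definition lsum {n} (l : list (Fin.t n)) (f : Fin.t n -> R) : R :=
  fold_right (fun a acc => f a + acc) 0 l.

Lemma lsum_map {n} (l : list (Fin.t n)) f : lsum (map Fin.FS l) f = lsum l (fun i => f (Fin.FS i)).
Proof. induction l; simpl; auto. unfold lsum in *; simpl. rewrite IHl; auto. Qed.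

Lemma lsum_enum n f : lsum (enum n) f = fsum n f.
Proof.
  induction n; simpl; auto. unfold lsum at 1; simpl. fold (lsum (map Fin.FS (enum n)) f).
  rewrite lsum_map, IHn; auto.
Qed.

Lemma enum_In n (i : Fin.t n) : In i (enum n).
Proof.
  induction n. - exact (Fin.case0 _ i).
  - apply (Fin.caseS' i); simpl; auto. intros; right; apply in_map; auto.
Qed.

Lemma enum_NoDup n : NoDup (enum n).
Proof.
  induction n; simpl; constructor.
  - intros H; apply in_map_iff in H; destruct H as [x [H _]]; discriminate.
  - apply NoDup_map_NoDup_ForallPairs; auto. intros x y _ _; apply Fin.FS_inj.
Qed.

Lemma enum_length n : length (enum n) = n.
Proof. induction n; simpl; auto. rewrite length_map; auto. Qed.

Lemma fin_min n (Q : Fin.t n -> R -> Prop) :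
  (forall i d d', 0 < d' <= d -> Q i d -> Q i d') ->
  (forall i, exists d, d > 0 /\ Q i d) -> exists d, d > 0 /\ forall i, Q i d.
Proof.
  induction n; intros Hm Hex.
  - exists 1; split; [lra|]. apply Fin.case0.
  - destruct (IHn (fun i d => Q (Fin.FS i) d)) as [d1 [Hd1 H1]].
    + intros; eapply Hm; eauto.
    + intros; apply Hex.
    + destruct (Hex Fin.F1) as [d0 [Hd0 H0]].
      exists (Rmin d0 d1); split; [apply Rmin_glb_lt; auto|].
      intros i; apply (Fin.caseS' i).
      * eapply Hm; [|exact H0]. split; [apply Rmin_glb_lt; auto| apply Rmin_l].
      * intros j; eapply Hm; [|apply H1]. split; [apply Rmin_glb_lt; auto| apply Rmin_r].
Qed.

Lemma fsum_nonneg n (f : Fin.t n -> R) : (forall j, 0 <= f j) -> 0 <= fsum n f.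
Proof.
  revert f; induction n; intros f H; simpl. lra.
  pose proof (H Fin.F1). pose proof (IHn (fun j => f (Fin.FS j)) (fun j => H _)). lra.
Qed.

Lemma fsum_ge n (f : Fin.t n -> R) i : (forall j, 0 <= f j) -> f i <= fsum n f.
Proof.
  revert f i; induction n; intros f i H. - exact (Fin.case0 (fun i => f i <= fsum 0 f) i).
  - simpl. apply (Fin.caseS' i).
    + pose proof (fsum_nonneg n (fun j => f (Fin.FS j)) (fun j => H _)). lra.
    + intros j. pose proof (IHn (fun j => f (Fin.FS j)) j (fun j => H _)). pose proof (H Fin.F1). lra.
Qed.

Definition box {n} (x0 : vec n) r (y : vec n) := forall i, Rabs (y i - x0 i) < r.
Definition mix {n} (l : list (Fin.t n)) (y y' : vec n) : vec n :=
  fun i => if in_dec Fin.eq_dec i l then y' i else y i.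

Lemma deriv_shift F t0 l : derivable_pt_lim (fun s => F (t0 + s)) 0 l -> derivable_pt_lim F t0 l.
Proof.
  intros H eps Heps. destruct (H eps Heps) as [d Hd]. exists d. intros h0 Hh Hh'.
  specialize (Hd h0 Hh Hh'). rewrite Rplus_0_l, Rplus_0_r in Hd. exact Hd.
Qed.

Lemma vupd_vupd {n} (x : vec n) i a b : vupd (vupd x i a) i b = vupd x i (a + b).
Proof. apply functional_extensionality; intros j; unfold vupd; destruct Fin.eq_dec; ring. Qed.

Lemma vupd_0 {n} (x : vec n) i : vupd x i 0 = x.
Proof. apply functional_extensionality; intros j; unfold vupd; destruct Fin.eq_dec; ring. Qed.

Lemma deriv_coord {n} (f : vec n -> R) D
  (HD : forall i x, derivable_pt_lim (fun t => f (vupd x i t)) 0 (D i x)) x i t0 :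
  derivable_pt_lim (fun t => f (vupd x i t)) t0 (D i (vupd x i t0)).
Proof.
  apply deriv_shift.
  replace (fun s => f (vupd x i (t0 + s))) with (fun s => f (vupd (vupd x i t0) i s)).
  - apply HD.
  - apply functional_extensionality; intros s; rewrite vupd_vupd; auto.
Qed.

Lemma mix_nil {n} (y y' : vec n) : mix nil y y' = y.
Proof. apply functional_extensionality; intros j; unfold mix; simpl; auto. Qed.

Lemma mix_cons {n} a l (y y' : vec n) : ~ In a l ->
  mix (a :: l) y y' = vupd (mix l y y') a (y' a - y a).
Proof.
  intros Ha. apply functional_extensionality; intros j; unfold mix, vupd.
  destruct (Fin.eq_dec a j) as [<-|Hne].
  - destruct (in_dec Fin.eq_dec a (a :: l)) as [_|C]; [|simpl in C; tauto].
    destruct (in_dec Fin.eq_dec a l); [tauto|]. ring.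
  - destruct (in_dec Fin.eq_dec j (a :: l)) as [Hj|Hj];
    destruct (in_dec Fin.eq_dec j l) as [Hj'|Hj']; auto.
    + simpl in Hj; destruct Hj; [congruence|tauto].
    + exfalso; apply Hj; simpl; auto.
Qed.

Lemma mix_full {n} (y y' : vec n) : mix (enum n) y y' = y'.
Proof.
  apply functional_extensionality; intros j; unfold mix.
  destruct in_dec as [_|C]; auto. exfalso; apply C, enum_In.
Qed.

Lemma path_est n (f : vec n -> R) D
  (HD : forall i x, derivable_pt_lim (fun t => f (vupd x i t)) 0 (D i x))
  x0 r L eps (HL : forall xi i, box x0 r xi -> Rabs (D i xi - L i) <= eps)
  y y' rho (Hy : box x0 r y) (Hy' : box x0 r y') (Hr : forall i, Rabs (y' i - y i) <= rho) :
  forall l, NoDup l ->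
  Rabs (f (mix l y y') - f y - lsum l (fun i => L i * (y' i - y i))) <= INR (length l) * eps * rho.
Proof.
  induction l as [|a l IH]; intros Hnd.
  - rewrite mix_nil. simpl. unfold lsum; simpl. rewrite Rminus_diag, Rminus_0_r, Rabs_R0. lra.
  - inversion Hnd as [|? ? Ha Hnd']; subst. specialize (IH Hnd').
    rewrite mix_cons by auto. set (m := mix l y y') in *. set (Dl := y' a - y a).
    destruct (MVT_gen (fun t => f (vupd m a t)) 0 Dl (fun t => D a (vupd m a t))) as [c [Hc Hmvt]].
    + intros x _. apply is_derive_Reals. apply deriv_coord; auto.
    + intros x _. apply derivable_continuous_pt. exists (D a (vupd m a x)). apply deriv_coord; auto.
    + simpl in Hmvt. rewrite vupd_0 in Hmvt.
      assert (Hbox : box x0 r (vupd m a c)).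
      { intros j. unfold vupd. destruct (Fin.eq_dec a j) as [<-|Hne].
        - assert (m a = y a). { unfold m, mix. destruct in_dec; tauto. }
          rewrite H. specialize (Hy a); specialize (Hy' a). unfold Dl in Hc.
          revert Hc Hy Hy'. unfold Rmin, Rmax, Rabs. repeat destruct Rle_dec; repeat destruct Rcase_abs; intros; lra.
        - unfold m, mix. destruct in_dec; [apply Hy'|apply Hy]. }
      specialize (HL _ a Hbox).
      assert (Rabs (D a (vupd m a c) * Dl - L a * Dl) <= eps * rho).
      { replace (D a (vupd m a c) * Dl - L a * Dl) with ((D a (vupd m a c) - L a) * Dl) by ring.
        rewrite Rabs_mult. apply Rmult_le_compat; try apply Rabs_pos; auto. apply Hr. }
      change (length (a :: l)) with (S (length l)). rewrite S_INR.
      unfold lsum in *; simpl. fold (lsum l (fun i => L i * (y' i - y i))) in *.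
      replace (f (vupd m a Dl) - f y - (L a * (y' a - y a) + lsum l (fun i => L i * (y' i - y i))))
        with ((f m - f y - lsum l (fun i => L i * (y' i - y i))) + (D a (vupd m a c) * Dl - L a * Dl))
        by (unfold Dl in *; lra).
      eapply Rle_trans; [apply Rabs_triang|]. lra.
Qed.

Lemma fsum_plus n (f g : Fin.t n -> R) : fsum n (fun i => f i + g i) = fsum n f + fsum n g.
Proof. revert f g; induction n; intros; simpl; [ring|]. rewrite IHn; ring. Qed.
Lemma fsum_scal n (f : Fin.t n -> R) c : fsum n (fun i => c * f i) = c * fsum n f.
Proof. revert f; induction n; intros; simpl; [ring|]. rewrite IHn; ring. Qed.
Lemma fsum_le n (f g : Fin.t n -> R) : (forall i, f i <= g i) -> fsum n f <= fsum n g.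
Proof. revert f g; induction n; intros f g H; simpl; [lra|]. pose proof (H Fin.F1).
  pose proof (IHn (fun i => f (Fin.FS i)) (fun i => g (Fin.FS i)) (fun i => H _)). lra. Qed.
Lemma fsum_abs n (f : Fin.t n -> R) : Rabs (fsum n f) <= fsum n (fun i => Rabs (f i)).
Proof. revert f; induction n; intros; simpl. rewrite Rabs_R0; lra.
  eapply Rle_trans; [apply Rabs_triang|]. pose proof (IHn (fun i => f (Fin.FS i))). lra. Qed.
Lemma fsum_ext n (f g : Fin.t n -> R) : (forall i, f i = g i) -> fsum n f = fsum n g.
Proof. intros; f_equal; apply functional_extensionality; auto. Qed.

Lemma lsum_zero {n} (l : list (Fin.t n)) : lsum l (fun _ => 0) = 0.
Proof. induction l; unfold lsum in *; simpl; auto. rewrite IHl; ring. Qed.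

Lemma fin_max n (P : Fin.t n -> R -> Prop) :
  (forall i B B', B <= B' -> P i B -> P i B') ->
  (forall i, exists B, P i B) -> exists B, forall i, P i B.
Proof.
  induction n; intros Hm Hex.
  - exists 0. intros i; exact (Fin.case0 (fun i => P i 0) i).
  - destruct (IHn (fun i d => P (Fin.FS i) d)) as [B1 H1].
    + intros; eapply Hm; eauto.
    + intros; apply Hex.
    + destruct (Hex Fin.F1) as [B0 H0].
      exists (Rmax B0 B1). intros i; apply (Fin.caseS' i).
      * eapply Hm; [apply Rmax_l|exact H0].
      * intros j; eapply Hm; [apply Rmax_r|apply H1].
Qed.

Definition C1D {n} (f : vec n -> R) (D : Fin.t n -> vec n -> R) : Prop :=
  (forall i x, derivable_pt_lim (fun t => f (vupd x i t)) 0 (D i x)) /\ (forall i, cont_vec (D i)).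

Lemma cont_D_near {n} (D : Fin.t n -> vec n -> R) x0 eps : (forall i, cont_vec (D i)) -> eps > 0 ->
  exists r, r > 0 /\ forall xi i, box x0 r xi -> Rabs (D i xi - D i x0) <= eps.
Proof.
  intros HD Heps.
  destruct (fin_min n (fun i r => forall xi, box x0 r xi -> Rabs (D i xi - D i x0) <= eps)) as [r [Hr H]].
  - intros i d d' Hd Hq xi Hb. apply Hq. intros k; specialize (Hb k); lra.
  - intros i. destruct (HD i x0 eps Heps) as [d [Hd H]]. exists d; split; auto.
    intros xi Hb; left; apply H; apply Hb.
  - exists r; split; auto.
Qed.

Lemma lip_local {n} (f : vec n -> R) D (HC : C1D f D) x0 :
  exists r B, r > 0 /\ 0 <= B /\ forall y y' rho, box x0 r y -> box x0 r y' ->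
    (forall i, Rabs (y' i - y i) <= rho) -> Rabs (f y' - f y) <= INR n * B * rho.
Proof.
  destruct HC as [HD HDc].
  destruct (cont_D_near D x0 1 HDc) as [r [Hr H]]; [lra|].
  set (B := fsum n (fun i => Rabs (D i x0)) + 1).
  assert (HB0 : 0 <= B) by (unfold B; pose proof (fsum_nonneg n (fun i => Rabs (D i x0)) (fun i => Rabs_pos _)); lra).
  exists r, B; repeat split; auto.
  intros y y' rho Hy Hy' Hrho.
  pose proof (path_est n f D HD x0 r (fun _ => 0) B) as P.
  assert (HL : forall xi i, box x0 r xi -> Rabs (D i xi - 0) <= B).
  { intros xi i Hb. specialize (H xi i Hb). rewrite Rminus_0_r.
    pose proof (fsum_ge n (fun i => Rabs (D i x0)) i (fun i => Rabs_pos _)). simpl in H0.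
    unfold B. pose proof (Rabs_triang_inv (D i xi) (D i x0)). lra. }
  specialize (P HL y y' rho Hy Hy' Hrho (enum n) (enum_NoDup n)).
  rewrite mix_full, enum_length in P.
  replace (fun i => 0 * (y' i - y i)) with (fun _ : Fin.t n => 0) in P
    by (apply functional_extensionality; intros; ring).
  rewrite lsum_zero, Rminus_0_r in P; auto.
Qed.

Lemma diff_local {n} (f : vec n -> R) D (HC : C1D f D) x0 eps : eps > 0 ->
  exists r, r > 0 /\ forall y' rho, box x0 r y' -> (forall i, Rabs (y' i - x0 i) <= rho) ->
    Rabs (f y' - f x0 - fsum n (fun i => D i x0 * (y' i - x0 i))) <= INR n * eps * rho.
Proof.
  intros Heps. destruct HC as [HD HDc].
  destruct (cont_D_near D x0 eps HDc Heps) as [r [Hr H]].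
  exists r; split; auto. intros y' rho Hy' Hrho.
  assert (Hx0 : box x0 r x0) by (intros i; rewrite Rminus_diag, Rabs_R0; auto).
  pose proof (path_est n f D HD x0 r (fun i => D i x0) eps H x0 y' rho Hx0 Hy' Hrho (enum n) (enum_NoDup n)) as P.
  rewrite mix_full, enum_length, lsum_enum in P. exact P.
Qed.

Lemma chain {n} (f : vec n -> R) D (HC : C1D f D) (z : R -> vec n) (v : vec n) t0
  (Hz : forall j, derivable_pt_lim (fun u => z u j) t0 (v j)) :
  derivable_pt_lim (fun u => f (z u)) t0 (fsum n (fun i => D i (z t0) * v i)).
Proof.
  intros eps Heps. set (x0 := z t0).
  set (K := INR n + 1). set (V := fsum n (fun i => Rabs (v i)) + 1).
  set (SD := fsum n (fun i => Rabs (D i x0)) + 1).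
  assert (HK : K > 0) by (unfold K; pose proof (pos_INR n); lra).
  assert (HV0 : forall i, Rabs (v i) + 1 <= V).
  { intros i; unfold V; pose proof (fsum_ge n (fun i => Rabs (v i)) i (fun _ => Rabs_pos _)); simpl in *; lra. }
  assert (HV : V > 0) by (unfold V; pose proof (fsum_nonneg n _ (fun i => Rabs_pos (v i))); lra).
  assert (HSD0 : fsum n (fun i => Rabs (D i x0)) >= 0) by (apply Rle_ge, fsum_nonneg; intros; apply Rabs_pos).
  assert (HSD : SD > 0) by (unfold SD; lra).
  set (e1 := eps / (2 * K * V)).
  assert (He1 : e1 > 0) by (unfold e1; apply Rdiv_lt_0_compat; [lra|]; apply Rmult_lt_0_compat; lra).
  destruct (diff_local f D HC x0 e1 He1) as [r [Hr Hdiff]].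
  set (e2 := Rmin 1 (eps / (2 * SD))).
  assert (He2 : e2 > 0) by (unfold e2; apply Rmin_glb_lt; [lra|]; apply Rdiv_lt_0_compat; lra).
  destruct (fin_min n (fun i d => forall h, h <> 0 -> Rabs h < d ->
     Rabs ((z (t0 + h) i - z t0 i) / h - v i) < e2)) as [d [Hd Hq]].
  { intros i d d' Hdd Hq h Hh Hh'. apply Hq; auto; lra. }
  { intros i. destruct (Hz i e2 He2) as [dd Hdd]. exists dd; split; [apply cond_pos|]. exact Hdd. }
  assert (Hdel : 0 < Rmin d (r / V)) by (apply Rmin_glb_lt; auto; apply Rdiv_lt_0_compat; lra).
  exists (mkposreal _ Hdel). intros h Hh Hh'. simpl in Hh'.
  assert (Hh1 : Rabs h < d) by (eapply Rlt_le_trans; [exact Hh'|apply Rmin_l]).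
  assert (Hh2 : Rabs h < r / V) by (eapply Rlt_le_trans; [exact Hh'|apply Rmin_r]).
  assert (Hah : Rabs h > 0) by (apply Rabs_pos_lt; auto).
  set (y' := z (t0 + h)).
  assert (HD : forall i, Rabs (y' i - x0 i) <= Rabs h * V).
  { intros i. specialize (Hq i h Hh Hh1). fold y' x0 in Hq.
    assert (Rabs ((y' i - x0 i) / h) <= Rabs (v i) + 1).
    { pose proof (Rabs_triang_inv ((y' i - x0 i) / h) (v i)).
      assert (e2 <= 1) by apply Rmin_l. lra. }
    replace (y' i - x0 i) with (h * ((y' i - x0 i) / h)) by (field; auto).
    rewrite Rabs_mult. apply Rmult_le_compat_l; [apply Rabs_pos|]. specialize (HV0 i); lra. }
  assert (Hbox : box x0 r y').
  { intros i. specialize (HD i). assert (Rabs h * V < r).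
    { apply (Rmult_lt_compat_r V) in Hh2; auto. unfold Rdiv in Hh2. rewrite Rmult_assoc, Rinv_l in Hh2; lra. }
    lra. }
  specialize (Hdiff y' (Rabs h * V) Hbox HD).
  assert (E : (f y' - f x0) / h - fsum n (fun i => D i x0 * v i) =
              (f y' - f x0 - fsum n (fun i => D i x0 * (y' i - x0 i))) / h
              + fsum n (fun i => D i x0 * ((y' i - x0 i) / h - v i))).
  { rewrite (fsum_ext n (fun i => D i x0 * ((y' i - x0 i) / h - v i))
             (fun i => / h * (D i x0 * (y' i - x0 i)) + (-1) * (D i x0 * v i))).
    - rewrite fsum_plus, !fsum_scal. field; auto.
    - intros; field; auto. }
  rewrite E.
  eapply Rle_lt_trans; [apply Rabs_triang|].
  assert (T1 : Rabs ((f y' - f x0 - fsum n (fun i => D i x0 * (y' i - x0 i))) / h) <= eps / 2 * (INR n / K)).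
  { unfold Rdiv at 1. rewrite Rabs_mult, Rabs_inv.
    apply (Rmult_le_reg_r (Rabs h)); auto. rewrite Rmult_assoc, Rinv_l by lra. rewrite Rmult_1_r.
    eapply Rle_trans; [exact Hdiff|]. unfold e1. right. field. split; lra. }
  assert (T1' : eps / 2 * (INR n / K) < eps / 2).
  { assert (INR n / K < 1). { apply (Rmult_lt_reg_r K); auto. unfold Rdiv; rewrite Rmult_assoc, Rinv_l; unfold K; pose proof (pos_INR n); lra. }
    assert (0 <= INR n / K) by (apply Rmult_le_pos; [apply pos_INR| left; apply Rinv_0_lt_compat; auto]).
    nra. }
  assert (T2 : Rabs (fsum n (fun i => D i x0 * ((y' i - x0 i) / h - v i))) < eps / 2).
  { eapply Rle_lt_trans; [apply fsum_abs|].
    eapply Rle_lt_trans.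
    { apply (fsum_le n _ (fun i => Rabs (D i x0) * e2)). intros i. rewrite Rabs_mult.
      apply Rmult_le_compat_l; [apply Rabs_pos|]. left; apply Hq; auto. }
    rewrite (fsum_ext n (fun i => Rabs (D i x0) * e2) (fun i => e2 * Rabs (D i x0))) by (intros; ring).
    rewrite fsum_scal.
    assert (e2 <= eps / (2 * SD)) by apply Rmin_r.
    assert (e2 * SD <= eps / 2).
    { apply (Rmult_le_compat_r SD) in H; [|lra]. replace (eps / (2 * SD) * SD) with (eps / 2) in H by (field; lra). lra. }
    unfold SD in H0. nra. }
  lra.
Qed.

Lemma deriv_clamp T f x l : 0 < x < T -> derivable_pt_lim f x l ->
  derivable_pt_lim (fun t => f (clamp 0 T t)) x l.
Proof.
  intros Hx H. apply is_derive_Reals. apply is_derive_Reals in H.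
  eapply is_derive_ext_loc; [|exact H].
  assert (Hp : 0 < Rmin x (T - x)) by (apply Rmin_glb_lt; lra).
  exists (mkposreal _ Hp). intros y Hy. change (Rabs (y - x) < Rmin x (T - x)) in Hy.
  pose proof (Rmin_l x (T - x)). pose proof (Rmin_r x (T-x)).
  rewrite clamp_id; auto. revert Hy; unfold Rabs; destruct Rcase_abs; intros; lra.
Qed.

Lemma lip_all {n} (F : vec n -> vec n) (HF : forall j, exists D, C1D (fun x => F x j) D) x0 :
  exists r B, r > 0 /\ 0 <= B /\ forall j y y' rho, 0 <= rho -> box x0 r y -> box x0 r y' ->
    (forall i, Rabs (y' i - y i) <= rho) -> Rabs (F y' j - F y j) <= INR n * B * rho.
Proof.
  destruct (fin_min n (fun j r => exists B, 0 <= B /\ forall y y' rho, 0 <= rho -> box x0 r y -> box x0 r y' ->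
    (forall i, Rabs (y' i - y i) <= rho) -> Rabs (F y' j - F y j) <= INR n * B * rho)) as [r [Hr H]].
  - intros j d d' Hd [B [HB HQ]]. exists B; split; auto. intros y y' rho Hrho Hy Hy' Hi.
    apply HQ; auto; intros k; [specialize (Hy k)|specialize (Hy' k)]; lra.
  - intros j. destruct (HF j) as [D HD]. destruct (lip_local _ D HD x0) as [r [B [Hr [HB H]]]].
    exists r; split; auto. exists B; split; auto.
  - destruct (fin_max n (fun j B => 0 <= B /\ forall y y' rho, 0 <= rho -> box x0 r y -> box x0 r y' ->
      (forall i, Rabs (y' i - y i) <= rho) -> Rabs (F y' j - F y j) <= INR n * B * rho)) as [B HB].
    + intros j B B' HBB [HB0 HQ]. split; [lra|]. intros y y' rho Hrho Hy Hy' Hi.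
      pose proof (HQ y y' rho Hrho Hy Hy' Hi). pose proof (pos_INR n).
      assert (INR n * B <= INR n * B') by (apply Rmult_le_compat_l; lra).
      assert (INR n * B * rho <= INR n * B' * rho) by (apply Rmult_le_compat_r; lra). lra.
    + intros j. apply (H j).
    + exists r, (Rmax 0 B). split; auto. split; [apply Rmax_l|].
      intros j y y' rho Hrho Hy Hy' Hi. destruct (HB j) as [HB0 HQ].
      pose proof (HQ y y' rho Hrho Hy Hy' Hi). rewrite Rmax_right by auto. lra.
Qed.

Lemma cont_near_vec {n} (w : R -> vec n) t0 r : r > 0 -> (forall i, continuity_pt (fun t => w t i) t0) ->
  exists d, d > 0 /\ forall t, Rabs (t - t0) < d -> box (w t0) r (w t).
Proof.
  intros Hr Hc.
  destruct (fin_min n (fun i d => forall t, Rabs (t - t0) < d -> Rabs (w t i - w t0 i) < r)) as [d [Hd H]].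
  - intros i d d' Hdd Hq t Ht. apply Hq; lra.
  - intros i. specialize (Hc i). unfold continuity_pt, continue_in, limit1_in, limit_in in Hc.
    destruct (Hc r Hr) as [d [Hd H]]. exists d; split; auto. intros t Ht.
    destruct (Req_dec t t0) as [->|Hne].
    + rewrite Rminus_diag, Rabs_R0; auto.
    + apply (H t). split; [split; [exact I|auto]|exact Ht].
  - exists d; split; auto. intros t Ht i. apply H; auto.
Qed.

Lemma geom_zero x r : r > 0 -> (forall k, Rabs x <= 2 * r * (1/2) ^ k) -> x = 0.
Proof.
  intros Hr H. destruct (Req_dec x 0) as [|Hx]; auto. exfalso.
  assert (Hax : Rabs x > 0) by (apply Rabs_pos_lt; auto).
  destruct (pow_lt_1_zero (1/2)) with (y := Rabs x / (2 * r)) as [N HN].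
  - rewrite Rabs_right; lra.
  - apply Rdiv_lt_0_compat; lra.
  - specialize (HN N (le_n N)). specialize (H N).
    rewrite Rabs_right in HN by (apply Rle_ge, pow_le; lra).
    apply (Rmult_lt_compat_l (2 * r)) in HN; [|lra].
    replace (2 * r * (Rabs x / (2 * r))) with (Rabs x) in HN by (field; lra). lra.
Qed.

Lemma local_step {n} (F : vec n -> vec n) (HF : forall j, exists D, C1D (fun x => F x j) D)
  (a : R -> R) (Ha : forall t, continuity_pt a t) T (w v : R -> vec n)
  (Hwc : forall i t, continuity_pt (fun t => w t i) t)
  (Hvc : forall i t, continuity_pt (fun t => v t i) t)
  (Hw : forall t, 0 < t < T -> forall j, derivable_pt_lim (fun u => w u j) t (a t * F (w t) j))
  (Hv : forall t, 0 < t < T -> forall j, derivable_pt_lim (fun u => v u j) t (a t * F (v t) j))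
  S (HS : 0 <= S < T) (HSeq : w S = v S) :
  exists d, d > 0 /\ S + d <= T /\ forall t, S <= t <= S + d -> w t = v t.
Proof.
  set (x0 := w S).
  destruct (lip_all F HF x0) as [r [B [Hr [HB Hlip]]]].
  set (Ka := Rabs (a S) + 1).
  destruct (Ha S 1) as [da [Hda Hda']]; [lra|].
  destruct (cont_near_vec w S r Hr (fun i => Hwc i S)) as [dw [Hdw Hdw']].
  destruct (cont_near_vec v S r Hr (fun i => Hvc i S)) as [dv [Hdv Hdv']].
  rewrite <- HSeq in Hdv'. fold x0 in Hdw', Hdv'.
  set (X := Ka * INR n * B).
  assert (HX : 0 <= X).
  { unfold X, Ka. pose proof (Rabs_pos (a S)). pose proof (pos_INR n).
    apply Rmult_le_pos; [apply Rmult_le_pos|]; lra. }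
  set (C := X + 1).
  set (m := Rmin (Rmin (Rmin da dw) (Rmin dv (T - S))) (1 / (2 * C))).
  assert (Hm : m > 0).
  { unfold m. repeat apply Rmin_glb_lt; try lra. apply Rdiv_lt_0_compat; unfold C; lra. }
  assert (Hmda : m <= da) by (unfold m; eapply Rle_trans; [apply Rmin_l|]; eapply Rle_trans; [apply Rmin_l|]; apply Rmin_l).
  assert (Hmdw : m <= dw) by (unfold m; eapply Rle_trans; [apply Rmin_l|]; eapply Rle_trans; [apply Rmin_l|]; apply Rmin_r).
  assert (Hmdv : m <= dv) by (unfold m; eapply Rle_trans; [apply Rmin_l|]; eapply Rle_trans; [apply Rmin_r|]; apply Rmin_l).
  assert (HmT : m <= T - S) by (unfold m; eapply Rle_trans; [apply Rmin_l|]; eapply Rle_trans; [apply Rmin_r|]; apply Rmin_r).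
  assert (HmC : m <= 1 / (2 * C)) by (unfold m; apply Rmin_r).
  set (d := m / 2).
  assert (Hd : d > 0) by (unfold d; lra).
  assert (HXd : X * d <= 1/2).
  { assert (C * m <= 1/2).
    { apply (Rmult_le_compat_l C) in HmC; [|unfold C; lra].
      replace (C * (1 / (2 * C))) with (1/2) in HmC by (field; unfold C; lra). lra. }
    unfold C in H. unfold d. nra. }
  assert (Hnear : forall t, S <= t <= S + d -> Rabs (t - S) < m).
  { intros t Ht. rewrite Rabs_right by lra. unfold d in Ht. lra. }
  assert (Hboxw : forall t, S <= t <= S + d -> box x0 r (w t)).
  { intros t Ht. apply Hdw'. specialize (Hnear t Ht). lra. }
  assert (Hboxv : forall t, S <= t <= S + d -> box x0 r (v t)).
  { intros t Ht. apply Hdv'. specialize (Hnear t Ht). lra. }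
  assert (Habound : forall t, S <= t <= S + d -> Rabs (a t) <= Ka).
  { intros t Ht. destruct (Req_dec t S) as [->|Hne]. unfold Ka; lra.
    assert (Rabs (a t - a S) < 1).
    { apply Hda'. split; [split; [exact I|auto]|]. simpl; unfold R_dist. specialize (Hnear t Ht). lra. }
    pose proof (Rabs_triang_inv (a t) (a S)). unfold Ka; lra. }
  assert (Hind : forall k t, S <= t <= S + d -> forall i, Rabs (w t i - v t i) <= 2 * r * (1/2) ^ k).
  { induction k as [|k IH]; intros t Ht i.
    - simpl. specialize (Hboxw t Ht i). specialize (Hboxv t Ht i).
      replace (w t i - v t i) with ((w t i - x0 i) - (v t i - x0 i)) by ring.
      eapply Rle_trans; [apply Rabs_triang|]. rewrite Rabs_Ropp. lra.
    - set (rho := 2 * r * (1/2) ^ k).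
      assert (Hrho : 0 <= rho) by (unfold rho; pose proof (pow_le (1/2) k); nra).
      replace (2 * r * (1/2) ^ (Datatypes.S k)) with (rho / 2) by (unfold rho; simpl; field).
      destruct (Req_dec t S) as [->|Hne].
      { rewrite HSeq, Rminus_diag, Rabs_R0. lra. }
      destruct (MVT_gen (fun u => w u i - v u i) S t (fun u => a u * F (w u) i - a u * F (v u) i))
        as [c [Hc Hmvt]].
      + intros x Hx. rewrite Rmin_left in Hx by lra. rewrite Rmax_right in Hx by lra.
        apply is_derive_Reals. apply derivable_pt_lim_minus.
        * apply Hw. unfold d in Ht. lra.
        * apply Hv. unfold d in Ht. lra.
      + intros x _. apply continuity_pt_minus; auto.
      + simpl in Hmvt. rewrite Rmin_left in Hc by lra. rewrite Rmax_right in Hc by lra.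
        rewrite HSeq, Rminus_diag, Rminus_0_r in Hmvt. rewrite Hmvt.
        assert (Hc' : S <= c <= S + d) by lra.
        assert (HL : Rabs (F (w c) i - F (v c) i) <= INR n * B * rho).
        { apply Hlip; auto. }
        replace (a c * F (w c) i - a c * F (v c) i) with (a c * (F (w c) i - F (v c) i)) by ring.
        rewrite !Rabs_mult. rewrite (Rabs_right (t - S)) by lra.
        pose proof (Habound c Hc'). pose proof (Rabs_pos (a c)). pose proof (Rabs_pos (F (w c) i - F (v c) i)).
        assert (Rabs (a c) * Rabs (F (w c) i - F (v c) i) <= X * rho).
        { unfold X. replace (Ka * INR n * B * rho) with (Ka * (INR n * B * rho)) by ring.
          apply Rmult_le_compat; auto. }
        assert (X * rho * (t - S) <= X * rho * d).
        { apply Rmult_le_compat_l; [nra|lra]. }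
        assert (X * rho * d <= rho / 2) by nra.
        assert (Rabs (a c) * Rabs (F (w c) i - F (v c) i) * (t - S) <= X * rho * (t - S)).
        { apply Rmult_le_compat_r; lra. }
        lra. }
  exists d; repeat split; auto.
  - unfold d; lra.
  - intros t Ht. apply functional_extensionality; intros i.
    apply Rminus_diag_uniq. apply (geom_zero _ r Hr). intros k; apply Hind; auto.
Qed.

Lemma ode_uniq {n} (F : vec n -> vec n) (HF : forall j, exists D, C1D (fun x => F x j) D)
  (a : R -> R) (Ha : forall t, continuity_pt a t) T (HT : T > 0) (w v : R -> vec n)
  (Hwc : forall i t, continuity_pt (fun t => w t i) t)
  (Hvc : forall i t, continuity_pt (fun t => v t i) t)
  (Hw : forall t, 0 < t < T -> forall j, derivable_pt_lim (fun u => w u j) t (a t * F (w t) j))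
  (Hv : forall t, 0 < t < T -> forall j, derivable_pt_lim (fun u => v u j) t (a t * F (v t) j))
  (H0 : w 0 = v 0) : forall t, 0 <= t <= T -> w t = v t.
Proof.
  set (E := fun t => 0 <= t <= T /\ forall s, 0 <= s <= t -> w s = v s).
  assert (HE0 : E 0).
  { split; [lra|]. intros s Hs. replace s with 0 by lra. auto. }
  destruct (completeness E) as [S [HSub HSl]].
  - exists T. intros t [Ht _]; lra.
  - exists 0; auto.
  assert (HS0 : 0 <= S) by (apply HSub; auto).
  assert (HST : S <= T) by (apply HSl; intros t [Ht _]; lra).
  assert (C1 : forall s, 0 <= s < S -> w s = v s).
  { intros s Hs. destruct (Classical_Prop.classic (exists t, E t /\ s <= t)) as [[t [[_ Ht] Hst]]|Hno].
    - apply Ht; lra.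
    - exfalso. assert (S <= s); [|lra]. apply HSl. intros t Et.
      destruct (Rle_dec t s); auto. exfalso; apply Hno; exists t; split; auto; lra. }
  assert (C2 : w S = v S).
  { destruct (Req_dec S 0) as [->|HSn]; auto.
    apply functional_extensionality; intros i.
    apply Rminus_diag_uniq. destruct (Req_dec (w S i - v S i) 0) as [|Hne]; auto. exfalso.
    assert (He : Rabs (w S i - v S i) > 0) by (apply Rabs_pos_lt; auto).
    pose proof (continuity_pt_minus _ _ S (Hwc i S) (Hvc i S)) as Hc.
    destruct (Hc _ He) as [al [Hal Hal']].
    set (s := S - Rmin al S / 2).
    assert (Hm1 : 0 < Rmin al S) by (apply Rmin_glb_lt; lra).
    pose proof (Rmin_l al S). pose proof (Rmin_r al S).
    assert (Hs : 0 <= s < S) by (unfold s; lra).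
    specialize (Hal' s). simpl in Hal'. unfold R_dist in Hal'.
    assert (Hd : Rabs (w s i - v s i - (w S i - v S i)) < Rabs (w S i - v S i)).
    { apply Hal'. split; [split; [exact I|unfold s; lra]|].
      rewrite Rabs_left by (unfold s; lra). unfold s; lra. }
    rewrite (C1 s Hs), Rminus_diag, Rminus_0_l, Rabs_Ropp in Hd. lra. }
  assert (C3 : S = T).
  { destruct (Req_dec S T) as [|Hne]; auto. exfalso.
    destruct (local_step F HF a Ha T w v Hwc Hvc Hw Hv S (conj HS0 (ltac:(lra) : S < T)) C2)
      as [d [Hd [HdT Hloc]]].
    assert (E (S + d)).
    { split; [lra|]. intros s Hs. destruct (Rlt_dec s S); [apply C1; lra|apply Hloc; lra]. }
    specialize (HSub _ H). lra. }
  intros t Ht. destruct (Req_dec t S) as [->|]; auto. apply C1; lra.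
Qed.

Lemma zsol_eq {n s} (p : vec s) (z0 : vec n) (h : vec n -> vec s -> vec n)
  (Hh : forall j, C1_vec (fun x => h x p j)) zhat (Hzhat : is_global_sol h p z0 zhat)
  T (HT : T > 0) nu (Hnu : cont_on 0 T nu) w (Hw : is_sol h p z0 T nu w) :
  w T = zhat (Ifun T nu).
Proof.
  destruct Hw as [Hwc [Hw0 Hwd]]. destruct Hzhat as [Hz0 Hzd].
  set (a := fun t => nu (clamp 0 T t)).
  assert (Ha : forall t, continuity_pt a t) by (intros; apply cont_on_clamp; auto; lra).
  assert (Ha' : forall t, continuous a t) by (intros; apply continuity_pt_filterlim; auto).
  assert (Hex : forall b, ex_RInt a 0 b).
  { intros b. apply (ex_RInt_continuous (V:=R_CompleteNormedModule)). intros; apply Ha'. }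
  set (M := fun t => RInt a 0 t).
  assert (HM : forall t, derivable_pt_lim M t (a t)).
  { intros t. apply is_derive_Reals. apply (is_derive_RInt (V:=R_NormedModule) a M 0 t).
    - exists (mkposreal 1 Rlt_0_1). intros y _. apply (RInt_correct (V:=R_CompleteNormedModule)). apply Hex.
    - apply Ha'. }
  set (v := fun t => zhat (M t)).
  assert (Hvd : forall t j, derivable_pt_lim (fun u => v u j) t (a t * h (v t) p j)).
  { intros t j. rewrite Rmult_comm.
    exact (derivable_pt_lim_comp M (fun tau => zhat tau j) t (a t) (h (zhat (M t)) p j) (HM t) (Hzd (M t) j)). }
  set (wc := fun t => w (clamp 0 T t)).
  assert (E : forall t, 0 <= t <= T -> wc t = v t).
  { apply (ode_uniq (fun x => h x p) (fun j => Hh j) a Ha T HT wc v).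
    - intros i t. apply (cont_on_clamp 0 T (fun t => w t i)); auto; lra.
    - intros i t. apply derivable_continuous_pt. exists (a t * h (v t) p i). apply Hvd.
    - intros t Ht j. unfold a, wc. rewrite !clamp_id by lra.
      apply (deriv_clamp T (fun u => w u j)); auto.
    - intros t _ j; apply Hvd.
    - unfold wc, v, M. rewrite clamp_id by lra. rewrite RInt_point. rewrite Hw0. change (@zero R_NormedModule) with 0. exact (eq_sym Hz0). }
  specialize (E T (conj (Rlt_le _ _ HT) (Rle_refl T))).
  unfold wc, v, M in E. rewrite clamp_id in E by lra. rewrite E. f_equal.
  unfold Ifun. rewrite RInt_eq by (apply cont_on_exRInt; auto; lra).
  apply RInt_ext. intros x Hx. rewrite Rmin_left in Hx by lra. rewrite Rmax_right in Hx by lra.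
  unfold a. rewrite clamp_id; auto; lra.
Qed.

Lemma lin_deriv I0 c : derivable_pt_lim (fun e => I0 + e * c) 0 c.
Proof. apply is_derive_Reals. auto_derive; auto. ring. Qed.

Lemma dpl_ext f g x l : (forall y, f y = g y) -> derivable_pt_lim f x l -> derivable_pt_lim g x l.
Proof. intros H. replace g with f; auto. apply functional_extensionality; auto. Qed.

Lemma partial_eq {n} (f : vec n -> R) D (HD : forall i x, derivable_pt_lim (fun t => f (vupd x i t)) 0 (D i x)) i x :
  partial f i x = D i x.
Proof.
  unfold partial. apply (uniqueness_limite (fun t => f (vupd x i t)) 0).
  - apply (epsilon_spec (inhabits 0) (fun l => derivable_pt_lim (fun t => f (vupd x i t)) 0 l)).
    exists (D i x); auto.
  - apply HD.
Qed.

Theorem theorem2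
  (n s : nat) (p : vec s) (z0 : vec n)
  (h : vec n -> vec s -> vec n)
  (Hh : forall q : vec s, forall j : Fin.t n, C1_vec (fun x => h x q j))
  (zhat : R -> vec n)
  (Hzhat : is_global_sol h p z0 zhat)
  (Hzhat_uniq : forall w : R -> vec n, is_global_sol h p z0 w -> forall tau, w tau = zhat tau)
  (T : R) (HT : T > 0)
  (zsol : (R -> R) -> R -> vec n)
  (Hzsol : forall mu : R -> R, cont_on 0 T mu -> is_sol h p z0 T mu (zsol mu))
  (Phi : vec n -> R) (HPhi : C1_vec Phi)
  (g : R -> R) (Hg : C1_real g) (Hgpos : forall x, 0 < g x)
  (Phibar : R)
  (mu : R -> R) (Hmu : cont_on 0 T mu) (Hmupos : forall t, 0 <= t <= T -> 0 < mu t)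
  (HPhih : Phih Phi h p zsol T mu <> 0) :
  (forall lam : R,
     Phi (zsol mu T) = Phibar -> stationary_a g Phi zsol T mu lam ->
     Ifun T mu > 0 /\
     Phi (zhat (Ifun T mu)) = Phibar /\
     stationary_b g T mu (lam * Phih Phi h p zsol T mu))
  /\
  (forall C2 lamref : R,
     C2 > 0 -> Phi (zhat C2) = Phibar ->
     Ifun T mu = C2 -> stationary_b g T mu lamref ->
     Phi (zsol mu T) = Phibar /\
     stationary_a g Phi zsol T mu (lamref / Phih Phi h p zsol T mu)).

Proof.
  assert (HT0 : 0 <= T) by lra.
  set (I0 := Ifun T mu).
  assert (Hx : zsol mu T = zhat I0) by (apply (zsol_eq p z0 h (fun j => Hh p j) zhat Hzhat T HT mu Hmu); auto).
  destruct HPhi as [D [HD HDc]].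
  assert (HPh : Phih Phi h p zsol T mu = fsum n (fun i => D i (zhat I0) * h (zhat I0) p i)).
  { unfold Phih, dot, grad. rewrite Hx. apply fsum_ext. intros i. rewrite (partial_eq Phi D HD). auto. }
  set (Ph := Phih Phi h p zsol T mu) in *.
  assert (Hchain : forall c, derivable_pt_lim (fun e => Phi (zhat (I0 + e * c))) 0 (Ph * c)).
  { intros c. rewrite HPh.
    assert (H1 := chain Phi D (conj HD HDc) zhat (h (zhat I0) p) I0 (fun j => proj2 Hzhat I0 j)).

    apply (derivable_pt_lim_comp (fun e => I0 + e * c) (fun u => Phi (zhat u)) 0 c).
    - apply lin_deriv.
    - replace (I0 + 0 * c) with I0 by ring. exact H1. }
  assert (Hpert : forall dmu, cont_on 0 T dmu -> forall e,
     zsol (fun t => mu t + e * dmu t) T = zhat (I0 + e * Ifun T dmu) /\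
     Ifun T (fun t => mu t + e * dmu t) = I0 + e * Ifun T dmu).
  { intros dmu Hd e. assert (Hl := Ifun_lin T mu dmu e HT0 Hmu Hd). split; auto.
    fold I0 in Hl. rewrite <- Hl. assert (Hc : cont_on 0 T (fun t => mu t + e * dmu t)) by (apply cont_on_plus; auto).
    exact (zsol_eq p z0 h (fun j => Hh p j) zhat Hzhat T HT _ Hc _ (Hzsol _ Hc)). }
  split.
  - intros lam HPhb Hst. split; [apply Ifun_pos; auto|]. split.
    + fold I0. rewrite <- Hx. auto.
    + intros dmu Hd. specialize (Hst dmu Hd). set (c := Ifun T dmu).
      assert (Hk : derivable_pt_lim (fun e => lam * Ph * (I0 + e * c) - lam * Phi (zhat (I0 + e * c))) 0 0).
      { replace 0 with (lam * Ph * c - lam * (Ph * c)) at 2 by ring.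
        apply derivable_pt_lim_minus.
        - apply derivable_pt_lim_scal. apply lin_deriv.
        - apply derivable_pt_lim_scal. apply Hchain. }
      pose proof (derivable_pt_lim_plus _ _ 0 0 0 Hst Hk) as Hsum. rewrite Rplus_0_l in Hsum.
      eapply dpl_ext; [|exact Hsum]. intros e. simpl. destruct (Hpert dmu Hd e) as [E1 E2].
      unfold plus_fct; cbv beta. rewrite E1, E2. fold c. ring.
  - intros C2 lamref HC2 HPhb HI Hst. split.
    + rewrite Hx. fold I0 in HI. rewrite HI. auto.
    + intros dmu Hd. specialize (Hst dmu Hd). set (c := Ifun T dmu).
      assert (Hk : derivable_pt_lim (fun e => lamref / Ph * Phi (zhat (I0 + e * c)) - lamref * (I0 + e * c)) 0 0).
      { replace 0 with (lamref / Ph * (Ph * c) - lamref * c) at 2 by (field; auto).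
        apply derivable_pt_lim_minus.
        - apply derivable_pt_lim_scal. apply Hchain.
        - apply derivable_pt_lim_scal. apply lin_deriv. }
      pose proof (derivable_pt_lim_plus _ _ 0 0 0 Hst Hk) as Hsum. rewrite Rplus_0_l in Hsum.
      eapply dpl_ext; [|exact Hsum]. intros e. simpl. destruct (Hpert dmu Hd e) as [E1 E2].
      unfold plus_fct; cbv beta. rewrite E1, E2. fold c. ring.
Qed.
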